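(* Suppose Assumption 1 holds. Then for any level $\ell$ and $j\in\{\ell-1,\ell\}$, the marginal kernel $p_{\ell,j}$ is uniformly tight: for every $\epsilon>0$ there exists a compact set $K_\epsilon\in\mathcal{B}(\mathsf{X})$ such that $p_{\ell,j}(\theta,K_\epsilon)>1-\epsilon$ for all $\theta\in\mathsf{X}$.
   Context: Setting: $\mathsf{X}$ separable Banach space, prior probability measure $\mu_{\mathrm{pr}}$; posteriors $\mu^y_j$ with $\mu_{\mathrm{pr}}$-densities $\pi^y_j$; proposal density $Q_\ell$ w.r.t. $\mu_{\mathrm{pr}}$; $\alpha_j(\theta,z)=\min\{1,\frac{\pi^y_j(z)Q_\ell(\theta)}{\pi^y_j(\theta)Q_\ell(z)}\}$. Marginal kernel: $p_{\ell,j}(\theta,A)=\int_A\alpha_j(\theta,z)Q_\ell(z)\mu_{\mathrm{pr}}(\mathrm{d}z)+\mathbf 1_{\{\theta\in A\}}\int_\mathsf{X}(1-\alpha_j(\theta,z))Q_\ell(z)\mu_{\mathrm{pr}}(\mathrm{d}z)$. Assumption 1: (1.1) $Q_\ell$ continuous and positive; (1.2) each $\pi^y_j$ continuous and positive; (1.3) for $j=\ell-1,\ell$, all $c_r>0$, $\{\theta: Q_\ell(\theta)/\pi^y_j(\theta)\le c_r\}$ compact; (1.4) $\exists c\in(0,1)$ independent of $\ell$ with $\operatorname{ess\,inf}_z Q_\ell(z)/\pi^y_j(z)\ge c$; (1.5) $\exists r>1,C_r$ independent of $\ell$ with $\int Q_\ell^r\mathrm{d}\mu_{\mathrm{pr}}\le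 C_r$. *)

(* Defs.v *)
From HB Require Import structures.
From mathcomp Require Import all_boot all_order all_algebra.
From mathcomp Require Import all_classical all_reals all_analysis.
Set Implicit Arguments. Unset Strict Implicit. Unset Printing Implicit Defensive.
Import Order.TTheory GRing.Theory Num.Theory.
Import numFieldNormedType.Exports.
Local Open Scope classical_set_scope.
Local Open Scope ring_scope.

Definition borel_space {R : realType} (V : normedModType R) :=
  g_sigma_algebraType (@open V).

Definition separable_space (T : topologicalType) : Prop :=
  exists D : set T, countable D /\ closure D = setT.

(* Acceptance probability alpha_j(theta,z) for posterior density pi
   and independence proposal density Q (both w.r.t. the prior). *)
Definition accept_prob {R : realType} {T : Type} (pi Q : T -> R) (theta z : T) : R :=
  Num.min 1 ((pi z * Q theta) / (pi theta * Q z)).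

Definition mh_kernel {R : realType} {d} {T : measurableType d}
  (mu : {measure set T -> \bar R}) (pi Q : T -> R) (theta : T) (A : set T) : \bar R :=
  (\int[mu]_(z in A) (accept_prob pi Q theta z * Q z)%:E
   + (\1_A theta)%:E * \int[mu]_z ((1 - accept_prob pi Q theta z) * Q z)%:E)%E.

(* Main.v *)
Require Import Defs.
From HB Require Import structures.
From mathcomp Require Import all_boot all_order all_algebra.
From mathcomp Require Import all_classical all_reals all_analysis.
From mathcomp Require Import measurable_realfun.
From mathcomp Require Import lra ring.
Import Order.TTheory GRing.Theory Num.Theory.
Import numFieldNormedType.Exports.
Local Open Scope classical_set_scope.
Local Open Scope ring_scope.

Section S.
Variables (R : realType) (V : completeNormedModType R).

Lemma compact_meas (A : set V) : compact A -> measurable (A : set (borel_space V)).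
Proof.
move=> cA; have cl : closed A by apply: compact_closed.
rewrite -(setCK A); apply: measurableC.
apply: sub_sigma_algebra. exact: closed_openC.
Qed.

Lemma int_approx (mu : probability (borel_space V) R) (Q post : V -> R)
  (mQ : measurable_fun [set: borel_space V] (Q : borel_space V -> R))
  (Qpos : forall x, 0 < Q x) (ppos : forall x, 0 < post x)
  (int1 : (\int[mu]_z (Q z)%:E = 1)%E)
  (Kc : forall n : nat, compact [set x : V | Q x / post x <= n.+1%:R])
  (eps : R) : 0 < eps ->
  exists n : nat, ((1 - eps)%:E < \int[mu]_(z in [set x : V | (Q x / post x <= n.+1%:R)%R]) (Q z)%:E)%E.
Proof.
move=> e0.
set K := fun n : nat => [set x : V | Q x / post x <= n.+1%:R].
have mK n : measurable (K n : set (borel_space V)) by apply: compact_meas; exact: Kc.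
pose g n : borel_space V -> \bar R := (EFin \o (Q : borel_space V -> R)) \_ (K n : set (borel_space V)).
have mg n : measurable_fun [set: borel_space V] (g n).
  apply: (measurable_restrictT _ (mK n)).1.
  by apply: measurable_funTS; exact/measurable_EFinP.
have g0 n x : (0 <= g n x)%E.
  rewrite /g patchE; case: ifPn => _ //=; rewrite lee_fin; exact/ltW.
have ndg x : {homo g^~ x : n m / (n <= m)%N >-> (n <= m)%E}.
  move=> n m nm; rewrite /g !patchE.
  case: ifPn => xn; case: ifPn => xm //=.
  - move: xm => /negP; elim; move: xn; rewrite !inE /K /= => H.
    by rewrite (le_trans H) // ler_nat.
  - rewrite lee_fin; exact/ltW.
have limg x : limn (g^~ x) = (Q x)%:E.
  apply/cvg_lim => //; apply: cvg_near_cst.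
  have px : 0 <= Q x / post x by rewrite divr_ge0 // ltW.
  near=> n.
  rewrite /g patchE ifT //= inE /K /=.
  apply: (le_trans (ltW (archi_boundP px))).
  rewrite ler_nat; apply: leqW; near: n; by exists (Num.bound (Q x / post x)).
have MC := @monotone_convergence _ _ _ mu setT measurableT g (fun n => measurable_funS measurableT (@subsetT _ _) (mg n)) (fun n x _ => g0 n x) (fun x _ => ndg x).
have e1 : ((1 - eps / 2)%:E < limn (fun n : nat => (\int[mu]_x g n x)%E))%E.
  rewrite -MC (eq_integral (fun x : borel_space V => (Q x)%:E)); last by move=> x _; exact: limg.
  rewrite int1 lte_fin; rewrite ltrBlDr ltrDl; exact: divr_gt0.
have nd : nondecreasing_seq (fun n : nat => (\int[mu]_x g n x)%E).
  move=> n m nm; apply: ge0_le_integral => //.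
  by move=> x _; exact: ndg.
have := lte_lim nd (ereal_nondecreasing_is_cvgn nd) e1.
case=> N _ HN; exists N.
have := HN N (leqnn N); rewrite /= /g -integral_mkcond => H.
apply: lt_le_trans H; rewrite lte_fin.
lra.
Unshelve. all: by end_near.
Qed.

Lemma aQ_eq (p Q : V -> R) (t z : V) : 0 < Q z -> 0 < p t ->
  accept_prob p Q t z * Q z = Num.min (Q z) (p z * (Q t / p t)).
Proof.
move=> Qz pt; rewrite /accept_prob.
have hr : p z * Q t / (p t * Q z) * Q z = p z * (Q t / p t).
  by field; apply/andP; split; rewrite gt_eqF.
rewrite !minEle -hr ler_pMl //; case: ifPn => _; [exact: mul1r|by []].
Qed.

Lemma key (mu : probability (borel_space V) R) (p Q : V -> R)
  (mQ : measurable_fun [set: borel_space V] (Q : borel_space V -> R))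
  (mp : measurable_fun [set: borel_space V] (p : borel_space V -> R))
  (Qpos : forall x, 0 < Q x) (ppos : forall x, 0 < p x) (c : R) (t : V) :
  measurable ([set x : V | Q x / p x <= c] : set (borel_space V)) ->
  (\int[mu]_(z in [set x : V | (Q x / p x <= c)%R]) (Q z)%:E <=
    mh_kernel mu p Q t [set x : V | (Q x / p x <= c)%R])%E.
Proof.
set K := [set x : V | Q x / p x <= c] => mK.
have a01 z : 0 <= accept_prob p Q t z <= 1.
  rewrite /accept_prob; apply/andP; split.
    by rewrite le_min ler01 /= divr_ge0 // ltW // ?mulr_gt0.
  by rewrite ge_min lexx.
have maQ : measurable_fun [set: borel_space V]
    ((fun z => accept_prob p Q t z * Q z) : borel_space V -> R).
  rewrite (_ : (fun z => _) = (fun z => Num.min (Q z) (p z * (Q t / p t)))); last first.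
    by apply/funext => z; rewrite aQ_eq.
  apply: measurable_minr => //; apply: measurable_funM => //.
rewrite /mh_kernel.
have [Kt|nKt] := pselect (K t).
- rewrite indicE mem_set // mul1e.
  have m1 : measurable_fun [set: borel_space V]
      ((fun z => (1 - accept_prob p Q t z) * Q z) : borel_space V -> R).
    rewrite (_ : (fun z => _) = (fun z => Q z - accept_prob p Q t z * Q z)); last first.
      by apply/funext => z; rewrite mulrBl mul1r.
    exact: measurable_funB.
  have i1 : forall z, 0 <= accept_prob p Q t z * Q z.
    by move=> z; case/andP: (a01 z) => h _; rewrite mulr_ge0 // ltW.
  have i2 : forall z, 0 <= (1 - accept_prob p Q t z) * Q z.
    by move=> z; case/andP: (a01 z) => _ h; rewrite mulr_ge0 ?subr_ge0 // ltW.
  apply: (@le_trans _ _ (\int[mu]_(z in K) (accept_prob p Q t z * Q z)%:E +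
     \int[mu]_(z in K) ((1 - accept_prob p Q t z) * Q z)%:E)%E).
    rewrite -ge0_integralD //.
    + by rewrite le_eqVlt; apply/orP; left; apply/eqP; apply: eq_integral => z _; rewrite -EFinD mulrBl mul1r addrC subrK.
    + by move=> z _; rewrite lee_fin.
    + by apply: measurable_funTS; exact/measurable_EFinP.
    + by move=> z _; rewrite lee_fin.
    + by apply: measurable_funTS; exact/measurable_EFinP.
  apply: leeD2l; apply: ge0_subset_integral => //.
  + exact/measurable_EFinP.
  + by move=> z _; rewrite lee_fin.
- rewrite indicE memNset // mul0e adde0.
  rewrite le_eqVlt; apply/orP; left; apply/eqP; apply: eq_integral => z.
  rewrite inE /K /= => Kz.
  rewrite /accept_prob.
  have Qz := Qpos z; have pz := ppos z; have Qt := Qpos t; have pt := ppos t.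
  move: Kz nKt; rewrite /K /= ler_pdivrMr // => Kz /negP; rewrite -ltNge ltr_pdivlMr // => nKt.
  rewrite (@min_l _ _ 1) ?mul1r //.
  rewrite ler_pdivlMr ?mulr_gt0 // mul1r.
  nra.
Qed.
End S.

Theorem mainTheorem5 (R : realType) (V : completeNormedModType R)
  (mu : probability (borel_space V) R)
  (Q : nat -> V -> R) (post : nat -> V -> R) :
  separable_space V ->
  (* Q_l and pi_j are probability densities w.r.t. the prior *)
  (forall l, measurable_fun [set: borel_space V] (Q l : borel_space V -> R)) ->
  (forall l, (\int[mu]_z (Q l z)%:E = 1)%E) ->
  (forall j, measurable_fun [set: borel_space V] (post j : borel_space V -> R)) ->
  (forall j, (\int[mu]_z (post j z)%:E = 1)%E) ->
  (* (1.1) *)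
  (forall l, continuous (Q l) /\ (forall x, 0 < Q l x)) ->
  (* (1.2) *)
  (forall j, continuous (post j) /\ (forall x, 0 < post j x)) ->
  (* (1.3) *)
  (forall l j, (j = l.-1 \/ j = l) -> forall cr : R, 0 < cr ->
     compact [set x : V | Q l x / post j x <= cr]) ->
  (* (1.4) *)
  (exists c : R, 0 < c < 1 /\
     forall l j, (j = l.-1 \/ j = l) ->
       {ae mu, forall z : borel_space V, c <= Q l z / post j z}) ->
  (* (1.5) *)
  (exists r Cr : R, 1 < r /\
     forall l, (\int[mu]_z ((Q l z) `^ r)%:E <= Cr%:E)%E) ->
  forall l j, (j = l.-1 \/ j = l) ->
  forall eps : R, 0 < eps ->
  exists K : set V, compact K /\ measurable (K : set (borel_space V)) /\
    forall theta : V,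
      ((1 - eps)%:E < mh_kernel mu (post j) (Q l) theta K)%E.

Proof.
move=> _ mQ iQ mP _ H11 H12 H13 _ _ l j hj eps e0.
have [cQ Qpos] := H11 l; have [cP Ppos] := H12 j.
have Kc : forall n : nat, compact [set x : V | Q l x / post j x <= n.+1%:R].
  by move=> n; apply: H13 => //; rewrite ltr0Sn.
have [n Hn] := @int_approx _ _ mu _ _ (mQ l) Qpos Ppos (iQ l) Kc eps e0.
exists [set x : V | Q l x / post j x <= n.+1%:R].
have mK := @compact_meas _ _ _ (Kc n).
split; first exact: Kc.
split; first exact: mK.
move=> t; apply: (lt_le_trans Hn).
exact: key.
Qed.
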